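(* Let $M$ be the metric space \[M:=\Big\{\Big(a,\tfrac{1}{2^{n}}\Big)\colon a\in[0,1],\ n\in\mathbb{N}\Big\}\cup \Big\{(a,b)\colon a\in\{0,1\},\ b\in\Big[0,\tfrac{1}{2}\Big]\Big\}\subseteq\mathbb{R}^2\] with the metric \[d\big((a,b),(c,e)\big):=\begin{cases} |a-c|, & \text{if }b=e,\\ \min\{a+c,\,2-a-c\}+|b-e|, &\text{if } b\neq e, \end{cases}\] and base point $(0,0)$. Then the Lipschitz-free space $\mathcal{F}(M)$ is not weakly almost square.
   Context: For a pointed metric space $(M,d,0)$, $\mathrm{Lip}_0(M)$ is the Banach space of Lipschitz functions $f\colon M\to\mathbb{R}$ with $f(0)=0$, normed by the best Lipschitz constant. Let $\delta\colon M\to\mathrm{Lip}_0(M)^*$, $\delta_x(f)=f(x)$. The Lipschitz-free space $\mathcal{F}(M)$ is the norm-closed linear span of $\{\delta_x\colon x\in M\}$ in $\mathrm{Lip}_0(M)^*$; its dual is $\mathrm{Lip}_0(M)$. A Banach space $X$ is weakly almost square (WASQ) if for every $x\in S_X$ there is a sequence $(y_i)\subseteq B_X$ with $\|x\pm y_i\|\to 1$, $\|y_i\|\to1$, and $y_i\to0$ weakly. Here $\mathbb{N}=\{1,2,\dots\}$. *)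

(* Defs.v *)
From HB Require Import structures.
From mathcomp Require Import all_boot all_order all_algebra.
From mathcomp Require Import all_classical all_reals all_analysis.
Set Implicit Arguments. Unset Strict Implicit. Unset Printing Implicit Defensive.
Import Order.TTheory GRing.Theory Num.Theory.
Import numFieldNormedType.Exports.
Local Open Scope classical_set_scope.
Local Open Scope ring_scope.

Section FreeSpace.
Context (R : realType).

(* The subset M of R^2. N = {1,2,...}. *)
Definition inM (p : R * R) : Prop :=
  (exists (a : R) (n : nat), 0 <= a <= 1 /\ (1 <= n)%N /\ p = (a, (2 ^+ n)^-1))
  \/ ((p.1 = 0 \/ p.1 = 1) /\ 0 <= p.2 <= 2^-1).

Definition Mpt := {p : R * R | inM p}.

Definition distM (p q : R * R) : R :=
  if p.2 == q.2 then `|p.1 - q.1|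
  else Num.min (p.1 + q.1) (2 - p.1 - q.1) + `|p.2 - q.2|.

Definition dM (x y : Mpt) : R := distM (proj1_sig x) (proj1_sig y).

Lemma inM_base : inM (0, 0).
Proof. by right; split; [left | rewrite /= lexx invr_ge0 ler0n]. Qed.

Definition base : Mpt := exist _ (0, 0) inM_base.

Definition lip0 (f : Mpt -> R) : Prop :=
  f base = 0 /\ exists L : R, forall x y, `|f x - f y| <= L * dM x y.

Definition lip1 (f : Mpt -> R) : Prop :=
  f base = 0 /\ forall x y, `|f x - f y| <= dM x y.

(* functionals on Lip_0(M) (only their values on Lip_0(M) matter) *)
Definition Fnl := (Mpt -> R) -> R.

Definition is_dual (mu : Fnl) : Prop :=
  (forall (a : R) f g, lip0 f -> lip0 g ->
     mu (fun x => a * f x + g x) = a * mu f + mu g)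
  /\ exists C : R, forall f, lip1 f -> `|mu f| <= C.

Definition dnorm (mu : Fnl) : R :=
  sup [set r : R | exists f, lip1 f /\ r = `|mu f|].

Definition delta (x : Mpt) : Fnl := fun f => f x.

Definition fadd (mu nu : Fnl) : Fnl := fun f => mu f + nu f.
Definition fscale (a : R) (mu : Fnl) : Fnl := fun f => a * mu f.
Definition fopp (mu : Fnl) : Fnl := fun f => - mu f.

(* F(M): norm-closure of the linear span of the deltas in Lip_0(M)^* *)
Definition in_free (mu : Fnl) : Prop :=
  is_dual mu /\
  forall eps : R, 0 < eps -> exists s : seq (Mpt * R),
    dnorm (fun f => mu f - \sum_(p <- s) p.2 * f p.1) < eps.

Definition free_dual (Phi : Fnl -> R) : Prop :=
  (forall (a : R) mu nu, in_free mu -> in_free nu ->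
     Phi (fadd (fscale a mu) nu) = a * Phi mu + Phi nu)
  /\ exists C : R, forall mu, in_free mu -> `|Phi mu| <= C * dnorm mu.

Definition weakly_null (y : nat -> Fnl) : Prop :=
  forall Phi, free_dual Phi -> (fun i => Phi (y i)) @ \oo --> (0 : R).

Definition free_WASQ : Prop :=
  forall x : Fnl, in_free x -> dnorm x = 1 ->
  exists y : nat -> Fnl,
    (forall i, in_free (y i) /\ dnorm (y i) <= 1) /\
    (fun i => dnorm (fadd x (y i))) @ \oo --> (1 : R) /\
    (fun i => dnorm (fadd x (fopp (y i)))) @ \oo --> (1 : R) /\
    (fun i => dnorm (y i)) @ \oo --> (1 : R) /\
    weakly_null y.

End FreeSpace.

(* Main.v *)
Require Import Defs.
From HB Require Import structures.
From mathcomp Require Import all_boot all_order all_algebra.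
From mathcomp Require Import all_classical all_reals all_analysis.
From mathcomp Require Import ring lra.
Set Implicit Arguments. Unset Strict Implicit. Unset Printing Implicit Defensive.
Import Order.TTheory GRing.Theory Num.Theory.
Import numFieldNormedType.Exports.
Local Open Scope classical_set_scope.
Local Open Scope ring_scope.

Section Work.
Context (R : realType).
Implicit Types (r s : Mpt R) (f g h : Mpt R -> R).

Definition crd1 r : R := (sval r).1.
Definition crd2 r : R := (sval r).2.
Definition tt_ r : R := `|3/8 - crd2 r|.

Lemma ptP r : (0 <= crd1 r <= 1) /\ (0 <= crd2 r <= 1/2) /\
  ((crd1 r = 0 \/ crd1 r = 1) \/ 1/8 <= tt_ r).
Proof.
rewrite /tt_ /crd1 /crd2; case: r => [[a e]] /=.
case=> [[a' [n [/andP[a0 a1] [n1 [-> ->]]]]]|[Ha /andP[e0 e1]]].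
- have n2 : (2 : R) <= 2 ^+ n.
    by case: n n1 => // n _; rewrite exprS; have := exprn_ege1 n (ler1n R 2); nra.
  have ep : 0 < 2 ^+ n :> R by rewrite exprn_gt0.
  have he : (2 ^+ n)^-1 <= 1/2 :> R.
    by rewrite mul1r lef_pV2 ?posrE //; lra.
  have hi0 : 0 <= (2 ^+ n)^-1 :> R by rewrite invr_ge0 ltW.
  split; first by rewrite a0 a1.
  split; first by rewrite hi0 /=; lra.
  right.
  case: n n1 {n2 ep he hi0} => // -[|[|n]] _.
  + rewrite expr1 -[X in 3/8 - X]mul1r ler0_norm; lra.
  + have -> : (2 ^+ 2 : R)^-1 = 1/4 by rewrite mul1r expr2 -natrM.
    rewrite ger0_norm; lra.
  + have h8 : 8 <= 2 ^+ n.+3 :> R.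
      rewrite !exprS mulrA mulrA; have := exprn_ege1 n (ler1n R 2); nra.
    have h8' : (2 ^+ n.+3)^-1 <= 1/8 :> R.
      rewrite mul1r lef_pV2 ?posrE //; lra.
    have : 0 <= (2 ^+ n.+3)^-1 :> R by rewrite invr_ge0; lra.
    move=> ?; rewrite ger0_norm; lra.
- split; first by case: Ha => /= ->; lra.
  split; first by rewrite /= e0 /=; move: e1; rewrite -[X in _ <= X -> _]mul1r.
  by left.
Qed.
Lemma slack_real (a c t t' w mn : R) :
 0 <= a <= 1 -> 0 <= c <= 1 -> 0 <= t <= 3/8 -> 0 <= t' <= 3/8 ->
 t - t' <= w -> t' - t <= w -> 0 <= w ->
 ((a = 0 \/ a = 1) \/ 1/8 <= t) -> ((c = 0 \/ c = 1) \/ 1/8 <= t') ->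
 (mn <= Num.min (a+c) (2-a-c) + w) ->
 (mn <= Num.min (a + t) (1 - a + t) + Num.min (c + t') (1 - c + t')) ->
 `|(a + (1/2 - a) * t) - (c + (1/2 - c) * t')| + 1/8 * mn <= Num.min (a+c) (2-a-c) + w.
Proof.
move=> /andP[a0 a1] /andP[c0 c1] /andP[t0 t1] /andP[t'0 t'1] h1 h2 w0 Pa Pc hm1 hm2.
have e1 : Num.min (a + t) (1 - a + t) <= a + t by rewrite ge_min lexx.
have e2 : Num.min (a + t) (1 - a + t) <= 1 - a + t by rewrite ge_min lexx orbT.
have e3 : Num.min (c + t') (1 - c + t') <= c + t' by rewrite ge_min lexx.
have e4 : Num.min (c + t') (1 - c + t') <= 1 - c + t' by rewrite ge_min lexx orbT.
move: hm2 e1 e2 e3 e4.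
move: (Num.min (a + t) (1 - a + t)) (Num.min (c + t') (1 - c + t')) => D1 D2 hm2 e1 e2 e3 e4.
have [m1|m1] := leP (a+c) (2-a-c).
  rewrite (min_l m1) in hm1 *.
  rewrite -lerBrDr ler_norml; apply/andP; split;
  case: Pa => [[]Ha|Pa]; case: Pc => [[]Hc|Pc]; try subst a; try subst c; nra.
rewrite (min_r (ltW m1)) in hm1 *.
rewrite -lerBrDr ler_norml; apply/andP; split;
case: Pa => [[]Ha|Pa]; case: Pc => [[]Hc|Pc]; try subst a; try subst c; nra.
Qed.


Lemma same_real (a c t mn : R) :
 0 <= a <= 1 -> 0 <= c <= 1 -> 0 <= t <= 3/8 ->
 ((a = 0 \/ a = 1) \/ 1/8 <= t) -> ((c = 0 \/ c = 1) \/ 1/8 <= t) ->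
 mn <= `|a - c| ->
 (mn <= Num.min (a + t) (1 - a + t) + Num.min (c + t) (1 - c + t)) ->
 `|(a + (1/2 - a) * t) - (c + (1/2 - c) * t)| + 1/8 * mn <= `|a - c|.
Proof.
move=> /andP[a0 a1] /andP[c0 c1] /andP[t0 t1] Pa Pc hm1 hm2.
have -> : (a + (1/2 - a) * t) - (c + (1/2 - c) * t) = (a - c) * (1 - t) by ring.
rewrite normrM (ger0_norm (_ : 0 <= 1 - t)); last by lra.
have u0 : 0 <= `|a - c| by [].
have e1 : Num.min (a + t) (1 - a + t) <= a + t by rewrite ge_min lexx.
have e2 : Num.min (a + t) (1 - a + t) <= 1 - a + t by rewrite ge_min lexx orbT.
have e3 : Num.min (c + t) (1 - c + t) <= c + t by rewrite ge_min lexx.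
have e4 : Num.min (c + t) (1 - c + t) <= 1 - c + t by rewrite ge_min lexx orbT.
move: hm2 e1 e2 e3 e4.
move: (Num.min (a + t) (1 - a + t)) (Num.min (c + t) (1 - c + t)) => D1 D2 hm2 e1 e2 e3 e4.
case: Pa => [Pa|Pa]; last by nra.
case: Pc => [Pc|Pc]; last by nra.
have [Hu|Hu] : `|a - c| = 0 \/ `|a - c| = 1.
  by case: Pa => ->; case: Pc => ->; rewrite ?subrr ?normr0 ?subr0 ?sub0r ?normrN ?normr1; auto.
- rewrite Hu in hm1 *; lra.
- rewrite Hu; case: Pa => Ha; subst a; lra.
Qed.

Lemma inM_p : inM ((0 : R), 3/8).
Proof. right; split; [by left | rewrite /= -[X in _ <= X]mul1r; apply/andP; split; lra]. Qed.
Lemma inM_q : inM ((1 : R), 3/8).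
Proof. right; split; [by right | rewrite /= -[X in _ <= X]mul1r; apply/andP; split; lra]. Qed.
Definition pp : Mpt R := exist _ _ inM_p.
Definition qq : Mpt R := exist _ _ inM_q.

Lemma dist_p r : dM r pp = crd1 r + tt_ r.
Proof.
have [/andP[a0 a1] _] := ptP r.
rewrite /dM /distM /tt_ /crd1 /crd2 /=; case: eqP => [->|_].
  by rewrite subrr normr0 subr0 addr0 ger0_norm.
rewrite addr0 subr0 min_l 1?distrC //; lra.
Qed.

Lemma dist_q r : dM r qq = 1 - crd1 r + tt_ r.
Proof.
have [/andP[a0 a1] _] := ptP r.
rewrite /dM /distM /tt_ /crd1 /crd2 /=; case: eqP => [->|_].
  by rewrite subrr normr0 addr0 distrC ger0_norm // subr_ge0.
rewrite min_r 1?distrC; first by congr (_ + _); ring.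
lra.
Qed.

Lemma dist_pq : dM pp qq = 1.
Proof. by rewrite dist_q /crd1 /tt_ /crd2 /= subrr normr0 addr0 subr0. Qed.

Lemma dist_pb : dM pp (base R) = 3/8.
Proof.
rewrite /dM /distM /=; case: eqP => [h|_]; first by exfalso; lra.
by rewrite addr0 subr0 min_l ?add0r ?subr0 ?ger0_norm //; lra.
Qed.

Lemma dist_qb : dM qq (base R) = 11/8.
Proof.
rewrite /dM /distM /=; case: eqP => [h|_]; first by exfalso; lra.
rewrite addr0 subr0 min_l ?ger0_norm; lra.
Qed.

Lemma dlip r s : `|(crd1 r + tt_ r) - (crd1 s + tt_ s)| <= dM r s /\
                 `|(1 - crd1 r + tt_ r) - (1 - crd1 s + tt_ s)| <= dM r s.
Proof.
have [/andP[a0 a1] _] := ptP r; have [/andP[c0 c1] _] := ptP s.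
rewrite /dM /distM /tt_ /crd1 /crd2 /=.
move: a0 a1 c0 c1; rewrite /crd1 /crd2.
case: (sval r) => a e; case: (sval s) => c e' /= a0 a1 c0 c1.
case: eqP => [->|_].
  set t := `|3/8 - e'|.
  have -> : a + t - (c + t) = a - c by ring.
  have -> : 1 - a + t - (1 - c + t) = c - a by ring.
  by rewrite distrC.
have h : `| `|3/8 - e| - `|3/8 - e'| | <= `|e - e'|.
  have eq1 : 3/8 - e - (3/8 - e') = e' - e by ring.
  by rewrite (distrC e e') -eq1 ler_dist_dist.
move: h; set t := `|3/8 - e|; set t' := `|3/8 - e'|; set w := `|e - e'|.
rewrite ler_norml => /andP[h1 h2].
have [m|m] := leP (a+c) (2-a-c).
  by split; rewrite ler_norml; apply/andP; split; lra.
by split; rewrite ler_norml; apply/andP; split; lra.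
Qed.

Lemma dM_eq r s : dM r s = if crd2 r == crd2 s then `|crd1 r - crd1 s|
  else Num.min (crd1 r + crd1 s) (2 - crd1 r - crd1 s) + `|crd2 r - crd2 s|.
Proof. by []. Qed.

Lemma tdiff r s : `|tt_ r - tt_ s| <= `|crd2 r - crd2 s|.
Proof.
rewrite /tt_; have eq1 : 3/8 - crd2 r - (3/8 - crd2 s) = crd2 s - crd2 r by ring.
by rewrite (distrC (crd2 r)) -eq1 ler_dist_dist.
Qed.

Lemma tbound r : 0 <= tt_ r <= 3/8.
Proof.
have [_ [/andP[e0 e1] _]] := ptP r.
by rewrite /tt_ normr_ge0 /= ler_norml; apply/andP; split; lra.
Qed.

Definition phi0 r : R := crd1 r + (1/2 - crd1 r) * tt_ r.
Definition Dd r : R := Num.min (crd1 r + tt_ r) (1 - crd1 r + tt_ r).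
Definition phi r : R := phi0 r - phi0 (base R).

Lemma slackM r s : `|phi0 r - phi0 s| + 1/8 * Num.min (dM r s) (Dd r + Dd s) <= dM r s.
Proof.
have [ha [_ Pa]] := ptP r; have [hc [_ Pc]] := ptP s.
have ht := tbound r; have ht' := tbound s.
have hm1 : Num.min (dM r s) (Dd r + Dd s) <= dM r s by rewrite ge_min lexx.
have hm2 : Num.min (dM r s) (Dd r + Dd s) <= Dd r + Dd s by rewrite ge_min lexx orbT.
move: hm1 hm2; move: (Num.min (dM r s) (Dd r + Dd s)) => mn hm1 hm2.
rewrite /phi0; rewrite /Dd in hm2.
have htd := tdiff r s.
move: hm1 htd Pa Pc hm2 ht ht'. rewrite dM_eq.
case: eqP => [He|He] hm1 htd Pa Pc hm2 ht ht'.
- have Ht : tt_ r = tt_ s by rewrite /tt_ He.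
  rewrite -Ht in hm2 Pc *.
  exact: same_real.
- move: htd; rewrite ler_norml => /andP[h1 h2].
  apply: slack_real => //; lra.
Qed.

Definition lamb : R := 1/104.

Lemma key_lip (k : Mpt R -> R) :
  (forall r s, `|k r - k s| <= 13 * dM r s) -> k pp = 0 -> k qq = 0 -> k (base R) = 0 ->
  lip1 (fun r => phi r + lamb * k r).
Proof.
move=> kL kp kq kb; split; first by rewrite /phi kb subrr mulr0 addr0.
move=> r s.
have Hk : forall r, `|k r| <= 13 * Dd r.
  move=> z; rewrite /Dd.
  have [m|m] := leP (crd1 z + tt_ z) (1 - crd1 z + tt_ z).
    by rewrite -dist_p -[k z]subr0 -kp kL.
  by rewrite -(dist_q z) -[k z]subr0 -kq kL.
have hs := slackM r s.
have e1 : `|phi r + lamb * k r - (phi s + lamb * k s)| <= `|phi0 r - phi0 s| + lamb * `|k r - k s|.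
  have -> : phi r + lamb * k r - (phi s + lamb * k s) = (phi0 r - phi0 s) + lamb * (k r - k s).
    by rewrite /phi; ring.
  by rewrite (le_trans (ler_normD _ _)) // normrM (ger0_norm (_ : 0 <= lamb)) // /lamb.
have e2 : lamb * `|k r - k s| <= 1/8 * Num.min (dM r s) (Dd r + Dd s).
  have hk1 := kL r s.
  have hk2 : `|k r - k s| <= 13 * (Dd r + Dd s).
    by rewrite (le_trans (ler_distD 0 _ _)) // sub0r normrN subr0 mulrDr lerD.
  have [m|m] := leP (dM r s) (Dd r + Dd s); rewrite /lamb; lra.
lra.
Qed.

Lemma dM_ge0 r s : 0 <= dM r s.
Proof.
have [/andP[a0 a1] _] := ptP r; have [/andP[c0 c1] _] := ptP s.
rewrite dM_eq; case: eqP => _ //.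
have h : 0 <= Num.min (crd1 r + crd1 s) (2 - crd1 r - crd1 s).
  by rewrite le_min; apply/andP; split; lra.
by rewrite addr_ge0.
Qed.

Lemma lip1_lip0 f : lip1 f -> lip0 f.
Proof. by case=> h1 h2; split=> //; exists 1 => x y; rewrite mul1r. Qed.

Lemma lip0_comb (a : R) f g : lip0 f -> lip0 g -> lip0 (fun x => a * f x + g x).
Proof.
case=> f0 [L1 h1] [g0 [L2 h2]]; split; first by rewrite f0 g0 mulr0 addr0.
exists (`|a| * L1 + L2) => x y.
have -> : a * f x + g x - (a * f y + g y) = a * (f x - f y) + (g x - g y) by ring.
rewrite (le_trans (ler_normD _ _)) // normrM mulrDl -mulrA lerD //.
by rewrite ler_wpM2l.
Qed.

Lemma lip1_zero : lip1 (fun _ : Mpt R => 0).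
Proof. by split=> // x y; rewrite subrr normr0 dM_ge0. Qed.

Definition bdd (mu : Fnl R) := exists C : R, forall f, lip1 f -> `|mu f| <= C.

Lemma dual_ub mu f : bdd mu -> lip1 f -> `|mu f| <= dnorm mu.
Proof.
move=> [C hC] hf; rewrite /dnorm; apply: sup_upper_bound; last by exists f.
split; first by exists `|mu f|, f.
by exists C => r [g [hg ->]]; apply: hC.
Qed.

Lemma dnorm_le mu C : (forall f, lip1 f -> `|mu f| <= C) -> dnorm mu <= C.
Proof.
move=> hC; rewrite /dnorm; apply: ge_sup; first by exists `|mu (fun=> 0)|, (fun=> 0); split=> //; exact: lip1_zero.
by move=> r [g [hg ->]]; apply: hC.
Qed.

Lemma dnorm_approx mu eps : bdd mu -> 0 < eps -> exists f, lip1 f /\ dnorm mu - eps < `|mu f|.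
Proof.
move=> [C hC] e0.
have hs : has_sup [set r : R | exists f, lip1 f /\ r = `|mu f|].
  split; first by exists `|mu (fun=> 0)|, (fun=> 0); split=> //; exact: lip1_zero.
  by exists C => r [g [hg ->]]; apply: hC.
have [r [f [hf ->]] hr] := sup_adherent e0 hs.
by exists f.
Qed.

Lemma free_bdd mu : in_free mu -> bdd mu.
Proof. by case=> [[_ h] _]. Qed.

Lemma free_lin mu (a : R) f g : in_free mu -> lip0 f -> lip0 g ->
  mu (fun x => a * f x + g x) = a * mu f + mu g.
Proof. by case=> [[h _] _]; apply: h. Qed.

Lemma eval_dual h : lip1 h -> free_dual (fun mu : Fnl R => mu h).
Proof.
move=> hh; split; first by [].
exists 1 => mu hmu; rewrite mul1r; apply: dual_ub => //; exact: free_bdd.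
Qed.

Lemma phi_lip1 : lip1 phi.
Proof.
have := @key_lip (fun _ => 0).
have -> : (fun r => phi r + lamb * 0) = phi by apply: boolp.funext => r; rewrite mulr0 addr0.
apply=> //. by move=> r s; rewrite subrr normr0 mulr_ge0 // dM_ge0.
Qed.

Lemma phi_pq : phi qq - phi pp = 1.
Proof.
rewrite /phi /phi0 /tt_ /crd1 /crd2 /= subrr normr0 !mulr0 !addr0; ring.
Qed.

Definition xx : Fnl R := fun f => f qq - f pp.

Lemma xx_bdd : forall f, lip1 f -> `|xx f| <= 1.
Proof. by move=> f [_ hf]; rewrite /xx -dist_pq distrC hf. Qed.

Lemma dnorm0 : dnorm (fun _ : (Mpt R -> R) => (0 : R)) = 0.
Proof.
apply/le_anti/andP; split; first by apply: dnorm_le => f _; rewrite normr0.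
have := @dual_ub (fun _ => 0) (fun _ => 0) _ lip1_zero; rewrite normr0; apply.
by exists 0 => f _; rewrite normr0.
Qed.

Lemma xx_free : in_free xx.
Proof.
split; first split.
- by move=> a f g _ _; rewrite /xx; ring.
- by exists 1; exact: xx_bdd.
move=> eps e0; exists [:: (qq, 1); (pp, -1)].
have -> : (fun f => xx f - \sum_(p <- [:: (qq, 1); (pp, -1)]) p.2 * f p.1) = (fun _ => 0).
  by apply: boolp.funext => f; rewrite !big_cons big_nil /= /xx; ring.
by rewrite dnorm0.
Qed.

Lemma xx_norm : dnorm xx = 1.
Proof.
apply/le_anti/andP; split; first by apply: dnorm_le; exact: xx_bdd.
have := @dual_ub xx phi _ phi_lip1; rewrite /xx phi_pq normr1; apply.
by exists 1; exact: xx_bdd.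
Qed.

Definition uf r : R := Num.max 0 (1/4 - (crd1 r + tt_ r)).
Definition vf r : R := Num.max 0 (1/4 - (1 - crd1 r + tt_ r)).

Lemma max_lip (A B : R) : `|Num.max 0 A - Num.max 0 B| <= `|A - B|.
Proof.
have n1 : A - B <= `|A - B| by apply: ler_norm.
have n2 : - (A - B) <= `|A - B| by rewrite -normrN ler_norm.
have [h1|h1] := leP 0 A; have [h2|h2] := leP 0 B;
  rewrite ler_norml; apply/andP; split; lra.
Qed.

Lemma uf_lip1 : lip1 uf.
Proof.
split.
  rewrite /uf /crd1 /tt_ /crd2 /= subr0 add0r ger0_norm; last by lra.
  by rewrite max_l //; lra.
move=> r s; rewrite /uf (le_trans (max_lip _ _)) //.
have [h _] := dlip r s; move: h.
have -> : 1/4 - (crd1 r + tt_ r) - (1/4 - (crd1 s + tt_ s)) = - ((crd1 r + tt_ r) - (crd1 s + tt_ s)) by ring.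
by rewrite normrN.
Qed.

Lemma vf_lip1 : lip1 vf.
Proof.
split.
  rewrite /vf /crd1 /tt_ /crd2 /= subr0 ger0_norm; last by lra.
  by rewrite max_l //; lra.
move=> r s; rewrite /vf (le_trans (max_lip _ _)) //.
have [_ h] := dlip r s; move: h.
have -> : 1/4 - (1 - crd1 r + tt_ r) - (1/4 - (1 - crd1 s + tt_ s)) = - ((1 - crd1 r + tt_ r) - (1 - crd1 s + tt_ s)) by ring.
by rewrite normrN.
Qed.

Lemma uf_p : uf pp = 1/4.
Proof. by rewrite /uf /crd1 /tt_ /crd2 /= ?subrr ?normr0 ?addr0 ?subr0 ?add0r max_r //; lra. Qed.
Lemma uf_q : uf qq = 0.
Proof. by rewrite /uf /crd1 /tt_ /crd2 /= ?subrr ?normr0 ?addr0 ?subr0 ?add0r max_l //; lra. Qed.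
Lemma vf_p : vf pp = 0.
Proof. by rewrite /vf /crd1 /tt_ /crd2 /= ?subrr ?normr0 ?addr0 ?subr0 ?add0r max_l //; lra. Qed.
Lemma vf_q : vf qq = 1/4.
Proof. by rewrite /vf /crd1 /tt_ /crd2 /= ?subrr ?normr0 ?addr0 ?subr0 ?add0r max_r //; lra. Qed.

Lemma lerN_norm (x : R) : - x <= `|x|.
Proof. by have := ler_norm (- x); rewrite normrN. Qed.

Lemma core (Y : Fnl R) (eps : R) : eps = 1/1000 -> in_free Y ->
  `|1 - dnorm (fadd xx Y)| < eps -> `|1 - dnorm Y| < eps ->
  `|0 - Y phi| < eps -> `|0 - Y uf| < eps -> `|0 - Y vf| < eps -> False.
Proof.
move=> -> HY h1 h2 h3 h4 h5.
have e0 : 0 < 1/1000 :> R by lra.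
have [g [hg hgY]] := dnorm_approx (free_bdd HY) e0.
set al := 4 * g pp; set ga := 4 * g qq.
have hal : `|al| <= 3/2.
  rewrite /al normrM ger0_norm // -[g pp]subr0 -(proj1 hg) (le_trans (ler_wpM2l _ (proj2 hg _ _))) //.
  by rewrite dist_pb; lra.
have hga : `|ga| <= 11/2.
  rewrite /ga normrM ger0_norm // -[g qq]subr0 -(proj1 hg) (le_trans (ler_wpM2l _ (proj2 hg _ _))) //.
  by rewrite dist_qb; lra.
set k := fun r => g r - al * uf r - ga * vf r.
have l0g := lip1_lip0 hg.
have l0u := lip1_lip0 uf_lip1.
have l0v := lip1_lip0 vf_lip1.
have l0p := lip1_lip0 phi_lip1.
have l0k : lip0 k.
  have -> : k = (fun r => (- al) * uf r + ((fun r => (- ga) * vf r + g r) r)).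
    by apply: boolp.funext => r; rewrite /k; ring.
  by apply: lip0_comb => //; apply: lip0_comb.
have Yk : Y k = Y g - al * Y uf - ga * Y vf.
  have -> : k = (fun r => (- al) * uf r + ((fun r => (- ga) * vf r + g r) r)).
    by apply: boolp.funext => r; rewrite /k; ring.
  rewrite free_lin //; last by apply: lip0_comb.
  rewrite free_lin //; ring.
have kL : forall r s, `|k r - k s| <= 13 * dM r s.
  move=> r s.
  have -> : k r - k s = (g r - g s) - al * (uf r - uf s) - ga * (vf r - vf s) by rewrite /k; ring.
  have d0 := dM_ge0 r s.
  have hu := proj2 uf_lip1 r s; have hv := proj2 vf_lip1 r s; have hgg := proj2 hg r s.
  have t1 : `|al * (uf r - uf s)| <= 3/2 * dM r s.
    by rewrite normrM; apply: ler_pM => //.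
  have t2 : `|ga * (vf r - vf s)| <= 11/2 * dM r s.
    by rewrite normrM; apply: ler_pM => //.
  have t3 := ler_normB (g r - g s - al * (uf r - uf s)) (ga * (vf r - vf s)).
  have t4 := ler_normB (g r - g s) (al * (uf r - uf s)).
  lra.
have kp : k pp = 0 by rewrite /k /= uf_p vf_p /al; field.
have kq : k qq = 0 by rewrite /k /= uf_q vf_q /ga; field.
have kb : k (base R) = 0 by rewrite /k /= (proj1 hg) (proj1 uf_lip1) (proj1 vf_lip1); ring.
set sg : R := if 0 <= Y k then 1 else -1.
have hsg : `|sg| = 1 by rewrite /sg; case: ifP => _; rewrite ?normrN normr1.
have hsk : sg * Y k = `|Y k|.
  rewrite /sg; case: ifP => h; first by rewrite mul1r ger0_norm.
  by rewrite ltr0_norm ?mulN1r // ltNge h.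
set k' := fun r => sg * k r.
have hf := @key_lip k'.
have hf' : lip1 (fun r => phi r + lamb * k' r).
  apply: hf; rewrite /k' ?kp ?kq ?kb ?mulr0 //.
  by move=> r s; rewrite -mulrBr normrM hsg mul1r.
set f := fun r => phi r + lamb * k' r.
have Yf : Y f = (lamb * sg) * Y k + Y phi.
  have -> : f = (fun r => (lamb * sg) * k r + phi r).
    by apply: boolp.funext => r; rewrite /f /k'; ring.
  by rewrite free_lin.
have xf : xx f = 1.
  by rewrite /xx /f /k' kp kq !mulr0 !addr0 phi_pq.
have bd : bdd (fadd xx Y).
  have [C hC] := free_bdd HY; exists (1 + C) => h hh.
  by rewrite /fadd (le_trans (ler_normD _ _)) // lerD // ?xx_bdd ?hC.
have := dual_ub bd hf'; rewrite -/f /fadd xf Yf -mulrA hsk Yk.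
move: h1 h2 h3 h4 h5; rewrite !sub0r !normrN => h1 h2 h3 h4 h5.
have t1 : `|al * Y uf| <= 3/2 * (1/1000) by rewrite normrM; apply: ler_pM => //; lra.
have t2 : `|ga * Y vf| <= 11/2 * (1/1000) by rewrite normrM; apply: ler_pM => //; lra.
have t3 : `|Y g| <= `|Y g - al * Y uf - ga * Y vf| + `|al * Y uf| + `|ga * Y vf|.
  rewrite {1}(_ : Y g = (Y g - al * Y uf - ga * Y vf) + al * Y uf + ga * Y vf); last by ring.
  by rewrite (le_trans (ler_normD _ _)) // lerD // ler_normD.
have t5 := ler_norm (Y phi).
have t6 := lerN_norm (Y phi).
have t7 : 0 <= lamb by rewrite /lamb.
have t8 := lerN_norm (1 + lamb * `|Y g - al * Y uf - ga * Y vf| + Y phi).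
have t9 := ler_norm (1 + lamb * `|Y g - al * Y uf - ga * Y vf| + Y phi).
rewrite /lamb in t7 t8 t9 *.
move=> H.
change (dnorm (fun f => xx f + Y f)) with (dnorm (fadd xx Y)) in H.
rewrite addrA in H.
move: h1 h2; rewrite !ltr_norml => /andP[h1a h1b] /andP[h2a h2b].
nra.
Qed.

End Work.

Theorem mainTheorem1 (R : realType) : ~ free_WASQ R.
Proof.
move=> H.
have [y [Hy [Hp [Hm [Hn Hw]]]]] := H (@xx R) (@xx_free R) (@xx_norm R).
have e0 : 0 < 1/1000 :> R by lra.
have /cvgrPdist_lt N1 := Hp.
have /cvgrPdist_lt N2 := Hn.
have /cvgrPdist_lt N3 := Hw _ (eval_dual (@phi_lip1 R)).
have /cvgrPdist_lt N4 := Hw _ (eval_dual (@uf_lip1 R)).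
have /cvgrPdist_lt N5 := Hw _ (eval_dual (@vf_lip1 R)).
have N : \forall i \near \oo,
   `|1 - dnorm (fadd (@xx R) (y i))| < 1/1000 /\ (`|1 - dnorm (y i)| < 1/1000 /\
   (`|0 - y i (@phi R)| < 1/1000 /\ (`|0 - y i (@uf R)| < 1/1000 /\ `|0 - y i (@vf R)| < 1/1000))).
  apply/near_andP; split; first exact: N1.
  apply/near_andP; split; first exact: N2.
  apply/near_andP; split; first exact: N3.
  apply/near_andP; split; first exact: N4.
  exact: N5.
have [i [h1 [h2 [h3 [h4 h5]]]]] := filter_ex N.
exact: (@core R (y i) (1/1000) erefl (proj1 (Hy i)) h1 h2 h3 h4 h5).
Qed.
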